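(* For any $n\times n$ symmetric matrix $w$ with nonnegative entries and $H=\sum_{i<j}w_{ij}E_{ij}$, \[\lambda_{\max}(H)\le\frac{\sum_{i<j}w_{ij}+\mathrm{LP}(w)}{2},\] where $\mathrm{LP}(w)$ is the optimum of the fractional matching linear program $\max\sum_{i<j}w_{ij}x_{ij}$ subject to $\sum_{j\ne i}x_{ij}\le1$ for all $i\in[n]$ and $x_{ij}\ge0$.
   Context: $E_{ij}$ is the projection onto $\ket{\mathrm{EPR}}=\frac{\ket{00}+\ket{11}}{\sqrt2}$ on qubits $i,j$ tensored with identity elsewhere; $\lambda_{\max}(H)$ is the largest eigenvalue. You may use the star bound: for any $n$-qubit state $\rho$ and $i\in[n]$, $\sum_{j\ne i}\max(0,2\operatorname{tr}(\rho E_{ij})-1)\le1$. *)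

(* Defs.v *)
From HB Require Import structures.
From mathcomp Require Import all_boot all_order all_algebra.
From mathcomp Require Import classical_sets reals.
Set Implicit Arguments. Unset Strict Implicit. Unset Printing Implicit Defensive.
Import Order.TTheory GRing.Theory Num.Theory.
Local Open Scope ring_scope.
Local Open Scope classical_set_scope.

(* n-qubit computational basis states are indexed by k : 'I_(2^n);
   the value of qubit i in basis state k is bit i of k. *)
Definition qbit (n : nat) (k : 'I_(2 ^ n)) (i : 'I_n) : bool := odd (k %/ 2 ^ i).

(* E_ij = |EPR><EPR| on qubits i,j tensored with identity elsewhere,
   with |EPR> = (|00>+|11>)/sqrt 2.  Entry <a|E_ij|b> equals
   [a and b agree on all qubits other than i,j] *
   <a_i a_j|EPR><EPR|b_i b_j> = [..] * (1/2)[a_i = a_j][b_i = b_j]. *)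
Definition Eproj (R : fieldType) (n : nat) (i j : 'I_n) : 'M[R]_(2 ^ n) :=
  \matrix_(a, b)
    (if [forall l : 'I_n, (l != i) && (l != j) ==> (qbit a l == qbit b l)]
        && (qbit a i == qbit a j) && (qbit b i == qbit b j)
     then 2%:R^-1 else 0).

Definition Hw (R : fieldType) (n : nat) (w : 'M[R]_n) : 'M[R]_(2 ^ n) :=
  \sum_(i < n) \sum_(j < n | (i < j)%N) w i j *: Eproj R i j.

Definition lambda_max (R : realType) (m : nat) (A : 'M[R]_m) : R :=
  sup [set a : R | eigenvalue A a].

(* feasible points of the fractional matching LP; a variable x_ij (i<j) is
   represented by a symmetric function x with x i j = x j i. *)
Definition fm_feasible (R : realType) (n : nat) (x : 'I_n -> 'I_n -> R) : Prop :=
  (forall i j, x i j = x j i) /\ (forall i j, 0 <= x i j) /\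
  (forall i : 'I_n, \sum_(j < n | j != i) x i j <= 1).

Definition fm_objective (R : realType) (n : nat) (w : 'M[R]_n)
  (x : 'I_n -> 'I_n -> R) : R :=
  \sum_(i < n) \sum_(j < n | (i < j)%N) w i j * x i j.

Definition LP (R : realType) (n : nat) (w : 'M[R]_n) : R :=
  sup [set v : R | exists x, fm_feasible x /\ v = fm_objective w x].

(* Main.v *)
Require Import Defs.
From HB Require Import structures.
From mathcomp Require Import all_boot all_order all_algebra.
From mathcomp Require Import classical_sets reals.
Import Order.TTheory GRing.Theory Num.Theory.
Local Open Scope ring_scope.
From mathcomp Require Import boolp ring lra.
Set Implicit Arguments. Unset Strict Implicit.
Lemma bits_inj_nat (n : nat) : forall k k' : nat, (k < 2 ^ n)%N -> (k' < 2 ^ n)%N ->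
  (forall l, (l < n)%N -> odd (k %/ 2 ^ l) = odd (k' %/ 2 ^ l)) -> k = k'.
Proof.
elim: n => [|n IH] k k' hk hk' hb.
  by move: hk hk'; rewrite expn0 !ltnS !leqn0 => /eqP-> /eqP->.
have h0 := hb 0%N (ltn0Sn n); rewrite !expn0 !divn1 in h0.
have e : (k %/ 2 = k' %/ 2)%N.
  apply: IH.
  - by rewrite ltn_divLR // -expnSr.
  - by rewrite ltn_divLR // -expnSr.
  move=> l hl; rewrite -!divnMA -expnS; exact: hb.
by rewrite (divn_eq k 2) (divn_eq k' 2) e !modn2 h0.
Qed.

Lemma qbit_inj (n : nat) (a b : 'I_(2 ^ n)) :
  (forall l, qbit a l = qbit b l) -> a = b.
Proof.
move=> h; apply: val_inj; apply: (@bits_inj_nat n); rewrite ?ltn_ord //.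
move=> l hl; exact: (h (Ordinal hl)).
Qed.

Lemma qbit_onto (n : nat) (f : 'I_n -> bool) :
  exists b : 'I_(2 ^ n), forall l, qbit b l = f l.
Proof.
pose bits := fun a : 'I_(2 ^ n) => [ffun l => qbit a l].
have inj : injective bits.
  move=> a b /ffunP h; apply: qbit_inj => l; have := h l; by rewrite !ffunE.
have := @inj_card_onto _ _ _ inj; rewrite card_ffun card_bool !card_ord leqnn.
move=> /(_ isT (finfun f)) /codomP [b hb]; exists b => l.
by have := congr1 (fun g : {ffun _ -> _} => g l) hb; rewrite /bits !ffunE.
Qed.

Section E.
Variables (R : realType) (n : nat).

Lemma Eproj_ij (i j : 'I_n) : Eproj R i j = Eproj R j i.
Proof.
apply/matrixP => a b; rewrite !mxE.
have -> : [forall l : 'I_n, (l != i) && (l != j) ==> (qbit a l == qbit b l)] =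
          [forall l : 'I_n, (l != j) && (l != i) ==> (qbit a l == qbit b l)].
  by apply: eq_forallb => l; rewrite andbC.
by rewrite (eq_sym (qbit a j)) (eq_sym (qbit b j)).
Qed.

Lemma Eproj_ab (i j : 'I_n) a b : Eproj R i j a b = Eproj R i j b a.
Proof.
rewrite !mxE.
have -> : [forall l : 'I_n, (l != i) && (l != j) ==> (qbit a l == qbit b l)] =
          [forall l : 'I_n, (l != i) && (l != j) ==> (qbit b l == qbit a l)].
  by apply: eq_forallb => l; rewrite (eq_sym (qbit a l)).
by rewrite -andbA (andbC (qbit a i == _)) andbA.
Qed.

Lemma Eproj_ge0 (i j : 'I_n) a b : 0 <= Eproj R i j a b.
Proof. by rewrite mxE; case: ifP => // _; rewrite invr_ge0 ler0n. Qed.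

Lemma Eproj_nz (i j : 'I_n) a b : Eproj R i j a b != 0 ->
  (qbit a i = qbit a j) /\ (qbit b i = qbit b j).
Proof.
rewrite mxE; case: ifP => [/andP[/andP[_ /eqP h1] /eqP h2] _ | _] //; by rewrite eqxx.
Qed.

Lemma Erow (i j : 'I_n) (a b0 : 'I_(2 ^ n)) (g : 'I_(2 ^ n) -> R) :
  i != j ->
  (forall l, qbit b0 l = if (l == i) || (l == j) then ~~ qbit a l else qbit a l) ->
  \sum_b Eproj R i j a b * g b =
    if qbit a i == qbit a j then (g a + g b0) / 2%:R else 0.
Proof.
move=> nij hb0.
case: eqP => hij; last first.
  apply: big1 => b _; rewrite mxE; case: ifP; last by rewrite mul0r.
  by move=> /andP[/andP[_ /eqP h] _].
have nab : b0 != a.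
  apply/eqP => e; have := hb0 i; rewrite e eqxx /=; by case: (qbit a i).
rewrite (bigD1 a) //= (bigD1 b0) //=.
rewrite big1 ?addr0; last first.
  move=> b /andP[nba nbb]; rewrite mxE; case: ifP; last by rewrite mul0r.
  move=> /andP[/andP[/forallP hf hai] /eqP hbi]; exfalso.
  case: (boolP (qbit b i == qbit a i)) => [/eqP e|ne].
  - move/eqP: nba; apply; apply: qbit_inj => l.
    have := hf l; case: (boolP (l == i)) => [/eqP->|li] /=; first by rewrite e.
    case: (boolP (l == j)) => [/eqP->|lj] /=; first by rewrite -hbi e hij.
    by move=> /eqP->.
  - move/eqP: nbb; apply; apply: qbit_inj => l; rewrite hb0.
    case: (boolP (l == i)) => [/eqP->|li] /=.
      by move: ne; case: (qbit b i); case: (qbit a i).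
    case: (boolP (l == j)) => [/eqP->|lj] /=.
      by move: ne; rewrite -hbi hij; case: (qbit b i); case: (qbit a j).
    by have := hf l; rewrite li lj /= => /eqP->.
have c1 : [forall l : 'I_n, (l != i) && (l != j) ==> (qbit a l == qbit a l)].
  by apply/forallP => l; rewrite eqxx implybT.
have c2 : [forall l : 'I_n, (l != i) && (l != j) ==> (qbit a l == qbit b0 l)].
  by apply/forallP => l; apply/implyP => /andP[li lj]; rewrite hb0 (negbTE li) (negbTE lj).
have c3 : qbit b0 i == qbit b0 j by rewrite !hb0 !eqxx /= orbT /= hij.
rewrite !mxE c1 c2 c3 hij eqxx /=.
by rewrite mulrDl !(mulrC _ (2%:R^-1)).
Qed.

End E.

Lemma amgm (R : realType) (x y r s : R) : 0 < r -> 0 < s ->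
  x * y <= s / r * x ^+ 2 / 2%:R + r / s * y ^+ 2 / 2%:R.
Proof.
move=> r0 s0; rewrite -subr_ge0.
have -> : s / r * x ^+ 2 / 2%:R + r / s * y ^+ 2 / 2%:R - x * y =
          (s * x - r * y) ^+ 2 / (2%:R * r * s).
  by field; rewrite ?gt_eqF.
by rewrite divr_ge0 ?sqr_ge0 // !mulr_ge0 ?ltW.
Qed.

Section Star.
Variables (R : realType) (n : nat) (v : 'rV[R]_(2 ^ n)) (i : 'I_n) (S : {set 'I_n}).
Hypothesis hiS : i \notin S.

Definition Q (A : 'M[R]_(2 ^ n)) := \sum_a \sum_b v 0 a * A a b * v 0 b.
Definition Nv := \sum_a v 0 a ^+ 2.
Definition cc (a : 'I_(2 ^ n)) : R := \sum_(l in S) ((qbit a l == qbit a i)%:R : R).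

Lemma cc_ge0 a : 0 <= cc a.
Proof. by apply: sumr_ge0 => l _; rewrite ler0n. Qed.

Lemma cc_gt0 a j : j \in S -> qbit a i = qbit a j -> 0 < cc a.
Proof.
move=> jS h; rewrite /cc (bigD1 j) //= h eqxx.
by apply: (@lt_le_trans _ _ 1); rewrite ?ltr01 // lerDl sumr_ge0 // => l _; rewrite ler0n.
Qed.

Lemma cc_pair j a b0 : j \in S -> qbit a i = qbit a j ->
  (forall l, qbit b0 l = if (l == i) || (l == j) then ~~ qbit a l else qbit a l) ->
  cc a + cc b0 = #|S|%:R + 1.
Proof.
move=> jS hij hb0; rewrite /cc -big_split /=.
rewrite (eq_bigr (fun l => 1 + ((l == j)%:R : R))); last first.
  move=> l lS.
  have li : l != i by apply: contraNneq hiS => <-.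
  rewrite !hb0 (negbTE li) eqxx /=.
  case: (boolP (l == j)) => [/eqP->|lj] /=; first by rewrite hij !eqxx.
  by case: (qbit a l); case: (qbit a i); rewrite /= ?addr0 ?add0r.
rewrite big_split /= sumr_const (bigD1 j) //= eqxx big1 ?addr0 //.
by move=> l /andP[_ /negbTE->].
Qed.

Lemma rowF j a : j \in S ->
  \sum_b Eproj R i j a b * cc b =
    (qbit a j == qbit a i)%:R * ((#|S|%:R + 1) / 2%:R).
Proof.
move=> jS.
have nij : i != j by apply: contraNneq hiS => ->.
have [b0 hb0] := qbit_onto (fun l => if (l == i) || (l == j) then ~~ qbit a l else qbit a l).
rewrite (Erow cc nij hb0) eq_sym.
case: eqP => h; last by rewrite mul0r.
by rewrite (cc_pair jS (esym h) hb0) mul1r.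
Qed.

Lemma pointwise j a b : j \in S ->
  v 0 a * Eproj R i j a b * v 0 b <=
  Eproj R i j a b * (cc b / cc a * v 0 a ^+ 2) / 2%:R +
  Eproj R i j b a * (cc a / cc b * v 0 b ^+ 2) / 2%:R.
Proof.
move=> jS; rewrite (Eproj_ab R i j b a).
case: (eqVneq (Eproj R i j a b) 0) => [->|nz]; first by rewrite !(mulr0, mul0r) addr0.
have [ha hb] := Eproj_nz nz.
have ca := cc_gt0 jS ha; have cb := cc_gt0 jS hb.
set E := Eproj R i j a b.
have -> : v 0 a * E * v 0 b = E * (v 0 a * v 0 b) by ring.
have -> : E * (cc b / cc a * v 0 a ^+ 2) / 2%:R + E * (cc a / cc b * v 0 b ^+ 2) / 2%:R
   = E * (cc b / cc a * v 0 a ^+ 2 / 2%:R + cc a / cc b * v 0 b ^+ 2 / 2%:R) by ring.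
apply: ler_wpM2l; first exact: Eproj_ge0.
exact: amgm.
Qed.

Lemma starQ : \sum_(j in S) Q (Eproj R i j) <= (#|S|%:R + 1) / 2%:R * Nv.
Proof.
pose F j a b := Eproj R i j a b * (cc b / cc a * v 0 a ^+ 2).
have step1 : forall j, j \in S -> Q (Eproj R i j) <= \sum_a \sum_b F j a b.
  move=> j jS.
  apply: (@le_trans _ _ (\sum_a \sum_b (F j a b / 2%:R + F j b a / 2%:R))).
    by apply: ler_sum => a _; apply: ler_sum => b _; exact: pointwise.
  rewrite (eq_bigr (fun a => \sum_b F j a b / 2%:R + \sum_b F j b a / 2%:R));
    last by move=> a _; rewrite big_split.
  rewrite big_split /= [X in _ + X <= _]exchange_big /=.
  have -> : \sum_a \sum_b F j a b / 2%:R = (\sum_a \sum_b F j a b) / 2%:R.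
    by rewrite mulr_suml; apply: eq_bigr => a _; rewrite mulr_suml.
  lra.
have step2 : forall j, j \in S -> \sum_a \sum_b F j a b =
    \sum_a v 0 a ^+ 2 / cc a * ((qbit a j == qbit a i)%:R * ((#|S|%:R + 1) / 2%:R)).
  move=> j jS; apply: eq_bigr => a _; rewrite -(rowF a jS) mulr_sumr.
  by apply: eq_bigr => b _; rewrite /F; ring.
apply: (@le_trans _ _ (\sum_(j in S) \sum_a v 0 a ^+ 2 / cc a *
          ((qbit a j == qbit a i)%:R * ((#|S|%:R + 1) / 2%:R)))).
  by apply: ler_sum => j jS; rewrite -step2 //; exact: step1.
rewrite exchange_big /= /Nv mulr_sumr; apply: ler_sum => a _.
rewrite -mulr_sumr -mulr_suml.
have -> : \sum_(j in S) ((qbit a j == qbit a i)%:R : R) = cc a by [].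
case: (eqVneq (cc a) 0) => [->|nz].
  rewrite mul0r mulr0; apply: mulr_ge0; last exact: sqr_ge0.
  by rewrite divr_ge0 ?addr_ge0 ?ler0n ?ler01.
by rewrite mulrA divfK // mulrC.
Qed.

End Star.

Section Main.
Variables (R : realType) (n : nat) (w : 'M[R]_n).
Hypotheses (wsym : forall i j, w i j = w j i) (wnn : forall i j, 0 <= w i j).

Definition Wt := \sum_(i < n) \sum_(j < n | (i < j)%N) w i j.

Lemma feas_le1 (x : 'I_n -> 'I_n -> R) i j : fm_feasible x -> i != j -> x i j <= 1.
Proof.
move=> [_ [x0 xr]] nij; apply: le_trans (xr i).
by rewrite (bigD1 j) 1?eq_sym //= lerDl sumr_ge0.
Qed.

Lemma obj_le x : fm_feasible x -> fm_objective w x <= Wt.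
Proof.
move=> fx; apply: ler_sum => i _; apply: ler_sum => j ij.
rewrite -[leRHS]mulr1; apply: ler_wpM2l => //; apply: feas_le1 => //.
by rewrite neq_ltn ij.
Qed.

Lemma LP_ub x : fm_feasible x -> fm_objective w x <= LP w.
Proof.
move=> fx; apply: ub_le_sup; last by exists x.
exists Wt => y [z [fz ->]]; exact: obj_le.
Qed.

Lemma LP_ge0 : 0 <= LP w.
Proof.
have f0 : fm_feasible (fun (_ _ : 'I_n) => 0 : R).
  by split=> //; split=> // i; rewrite big1.
apply: (@le_trans _ _ (fm_objective w (fun _ _ => 0))); last exact: LP_ub.
rewrite /fm_objective big1 // => i _.
by rewrite big1 // => j _; rewrite mulr0.
Qed.

Lemma Wt_ge0 : 0 <= Wt.
Proof. by apply: sumr_ge0 => i _; apply: sumr_ge0. Qed.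

Lemma eig_bound (lam : R) : eigenvalue (Hw w) lam -> lam <= (Wt + LP w) / 2%:R.
Proof.
move=> /eigenvalueP [v hv vnz].
pose N := Nv v.
have QD : {morph (Q v) : A B / A + B}.
  move=> A B; rewrite /Q -big_split; apply: eq_bigr => a _.
  rewrite -big_split; apply: eq_bigr => b _; by rewrite !mxE /= mulrDr mulrDl.
have Q0 : Q v 0 = 0.
  by rewrite /Q big1 // => a _; rewrite big1 // => b _; rewrite mxE mulr0 mul0r.
have QZ : forall c A, Q v (c *: A) = c * Q v A.
  move=> c A; rewrite /Q mulr_sumr; apply: eq_bigr => a _.
  rewrite mulr_sumr; apply: eq_bigr => b _; rewrite mxE; ring.
have QH : Q v (Hw w) = \sum_(i < n) \sum_(j < n | (i < j)%N) w i j * Q v (Eproj R i j).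
  rewrite /Hw (big_morph _ QD Q0); apply: eq_bigr => i _.
  rewrite (big_morph _ QD Q0); apply: eq_bigr => j _; exact: QZ.
have Qlam : Q v (Hw w) = lam * N.
  rewrite /Q exchange_big /N /Nv mulr_sumr; apply: eq_bigr => b _.
  have := congr1 (fun M : 'rV_(2 ^ n) => M 0 b) hv; rewrite !mxE => e.
  rewrite -mulr_suml e; ring.
have N0 : 0 < N.
  have [b hb] : exists b, v 0 b != 0.
    apply/existsP; move: vnz; apply: contraNT; rewrite negb_exists => /forallP h.
    by apply/eqP/rowP => b; rewrite mxE; apply/eqP; have := h b; rewrite negbK.
  rewrite /N /Nv (bigD1 b) //=; apply: (@lt_le_trans _ _ (v 0 b ^+ 2)).
    by rewrite lt_def sqr_ge0 andbT sqrf_eq0.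
  by rewrite lerDl sumr_ge0 // => a _; rewrite sqr_ge0.
have Nnz : N != 0 by rewrite gt_eqF.
pose p i j := Q v (Eproj R i j) / N.
pose x i j := if i == j then 0 else Num.max 0 (2%:R * p i j - 1).
have psym : forall i j, p i j = p j i by move=> i j; rewrite /p Eproj_ij.
have fx : fm_feasible x.
  split; first by move=> i j; rewrite /x eq_sym psym.
  split.
    by move=> i j; rewrite /x; case: eqP => // _; rewrite le_max lexx.
  move=> i; pose S := [set j | (j != i) && (1 < 2%:R * p i j)].
  have hiS : i \notin S by rewrite inE eqxx.
  have e : \sum_(j < n | j != i) x i j = \sum_(j in S) (2%:R * p i j - 1).
    rewrite big_mkcond [RHS]big_mkcond; apply: eq_bigr => j _ /=; rewrite inE /x eq_sym.
    case: eqP => //= _; case: (boolP (1 < 2%:R * p i j)) => h.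
      by rewrite max_r // subr_ge0 ltW.
    by rewrite max_l // subr_le0 leNgt.
  rewrite e big_split /= sumr_const -mulr_sumr.
  have -> : \sum_(j in S) p i j = (\sum_(j in S) Q v (Eproj R i j)) / N.
    by rewrite mulr_suml.
  have h1 := starQ v hiS.
  have h2 : (\sum_(j in S) Q v (Eproj R i j)) / N <= (#|S|%:R + 1) / 2%:R.
    by rewrite ler_pdivrMr.
  have -> : (-1 : R) *+ #|S| = - #|S|%:R by rewrite mulNrn.
  lra.
have lamE : lam = \sum_(i < n) \sum_(j < n | (i < j)%N) w i j * p i j.
  have -> : lam = Q v (Hw w) / N by rewrite Qlam mulfK.
  rewrite QH mulr_suml; apply: eq_bigr => i _; rewrite mulr_suml.
  by apply: eq_bigr => j _; rewrite mulrA.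
apply: (@le_trans _ _ ((Wt + fm_objective w x) / 2%:R)); last first.
  have := LP_ub fx; lra.
have -> : (Wt + fm_objective w x) / 2%:R = \sum_(i < n) \sum_(j < n | (i < j)%N)
    (w i j + w i j * x i j) / 2%:R.
  rewrite /Wt /fm_objective -big_split mulr_suml; apply: eq_bigr => i _.
  by rewrite -big_split mulr_suml.
rewrite lamE; apply: ler_sum => i _; apply: ler_sum => j ij.
have hx : 2%:R * p i j - 1 <= x i j.
  by rewrite /x ifF ?le_max ?lexx ?orbT //; apply/negbTE; rewrite neq_ltn ij.
have hx0 : 0 <= x i j.
  by rewrite /x ifF ?le_max ?lexx //; apply/negbTE; rewrite neq_ltn ij.
have h3 : 0 <= x i j - (2%:R * p i j - 1) by rewrite subr_ge0.
have := mulr_ge0 (wnn i j) h3.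
nra.
Qed.
End Main.

Theorem mainTheorem7 (R : realType) (n : nat) (w : 'M[R]_n)
  (wsym : forall i j, w i j = w j i) (wnn : forall i j, 0 <= w i j) :
  lambda_max (Hw w) <=
    ((\sum_(i < n) \sum_(j < n | (i < j)%N) w i j) + LP w) / 2%:R.
Proof.
rewrite /lambda_max -/(Wt w).
have B0 : 0 <= (Wt w + LP w) / 2%:R.
  by rewrite divr_ge0 ?ler0n // addr_ge0 ?Wt_ge0 ?LP_ge0.
case: (pselect (nonempty [set a : R | eigenvalue (Hw w) a])) => ne.
  apply: ge_sup => // y hy; exact: eig_bound.
by rewrite sup_out // => -[].
Qed.
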